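(* Let $G$ be a non abelian finitely generated group. The following conditions are equivalent: \begin{itemize} \item[(lim)] $G$ is a limit of dihedral groups; \item[(res)] $G$ is fully residually dihedral; \item[(iso)] $G$ is isomorphic to a semidirect product $A \rtimes \mathbb{Z}/2\mathbb{Z}$, where $A$ is a (finitely generated) group which is a limit of cyclic groups, and $\mathbb{Z}/2\mathbb{Z}$ acts on $A$ by multiplication by $-1$ (i.e. by $x\mapsto x^{-1}$); \item[($Th_\forall$)] $Th_{\forall}(G) \supset \bigcap_{n \ge 3} Th_{\forall}(\mathbb{D}_{2n})$; \item[($\Pi/\mathfrak{U}$)] $G$ is isomorphic to a subgroup of the ultraproduct $\left(\prod_{n \ge 3} \mathbb{D}_{2n} \right)/\mathfrak{U}$ for some ultrafilter $\mathfrak{U}$ on $\mathbb{N}$. \end{itemize}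
   Context: For $n\in\{1,2,\dots\}\cup\{\infty\}$, $\mathbb{D}_{2n}=\langle a,b \mid a^2=b^n=1,\ a^{-1}ba=b^{-1}\rangle$ (the relation $b^n=1$ omitted when $n=\infty$); a group is dihedral if it is isomorphic to some $\mathbb{D}_{2n}$. A marked group on $m$ generators is a pair $(G,S)$ with $S=(g_1,\dots,g_m)$ an ordered generating tuple of $G$; two are identified if an isomorphism maps one tuple to the other. Marked groups on $m$ generators correspond to normal subgroups of the free group $\mathbb{F}_m$ (kernels of the epimorphisms $\mathbb{F}_m\to G$ sending the basis to $S$); the space $\mathcal{M}_m$ of such marked groups carries the topology induced from the product topology on $\{0,1\}^{\mathbb{F}_m}$. The space $\mathcal{M}$ of all finitely generated marked groups is the inductive limit of the $\mathcal{M}_m$ under the embeddings $(G,(g_1,\dots,g_m))\mapsto(G,(g_1,\dots,g_m,1))$. A finitely generated group $G$ is a limit of groups with a property $P$ (e.g. dihedral, cyclic) if for some generating tuple $S$ of $G$, $(G,S)$ is the limit in $\mathcal{M}$ of a sequence of marked groups $(G_n,S_n)$ with each $G_n$ having $P$ (this does not depend on the choice of $S$). $G$ is fully residually $P$ if for every finite subset $F\subset G\setminus\{1\}$ there is a group $H$ with $P$ and a homomorphism $G\to H$ mapping no element of $F$ to $1$. A universal sentence is a sentence $\forall x_1\cdots\forall x_k\,\phi(x_1,\dots,x_k)$ in the language of groups (symbols $\cdot,{}^{-1},1,=$, connectives $\wedge,\vee,\neg$) with $\phi$ quantifier free; $Th_\forall(G)$ is the set of universal sentences true in $G$. For an ultrafilter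 $\mathfrak{U}$ on $\mathbb{N}$ (a finitely additive $\{0,1\}$-valued measure on all subsets of $\mathbb{N}$ with total mass 1), the ultraproduct $(\prod_n G_n)/\mathfrak{U}$ is the quotient of $\prod_n G_n$ by the relation of being equal on a set of indices of $\mathfrak{U}$-measure $1$. *)

(* Defs.v *)
(* abstract (possibly infinite) groups are given by an
   explicit record with Leibniz equality. *)
From mathcomp Require Import all_boot all_algebra.
From Stdlib Require Import List.

Set Implicit Arguments.
Unset Strict Implicit.
Unset Printing Implicit Defensive.

Import GRing.Theory.
Local Open Scope ring_scope.

Record grp := Grp {
  gcar :> Type;
  gmul : gcar -> gcar -> gcar;
  ginv : gcar -> gcar;
  gone : gcar;
  gmulA : forall x y z, gmul x (gmul y z) = gmul (gmul x y) z;
  gmul1 : forall x, gmul gone x = x;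
  gmulV : forall x, gmul (ginv x) x = gone }.

Arguments gmul {g}.
Arguments ginv {g}.
Arguments gone {g}.

Section GroupFacts.
Variable G : grp.
Implicit Types x y z : G.

Lemma gcancel x y z : gmul x y = gmul x z -> y = z.
Proof.
move=> h.
have: gmul (ginv x) (gmul x y) = gmul (ginv x) (gmul x z) by rewrite h.
by rewrite !gmulA gmulV !gmul1.
Qed.

Lemma gidem (e : G) : gmul e e = e -> e = gone.
Proof.
move=> h.
have: gmul (ginv e) (gmul e e) = gmul (ginv e) e by rewrite h.
by rewrite gmulA gmulV gmul1.
Qed.

Lemma gmulVr x : gmul x (ginv x) = gone.
Proof.
apply: gidem. by rewrite -gmulA (gmulA (ginv x)) gmulV gmul1.
Qed.

Lemma gmulr1 x : gmul x gone = x.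
Proof. by rewrite -(gmulV x) gmulA gmulVr gmul1. Qed.

Lemma ginvK x : ginv (ginv x) = x.
Proof.
apply: (@gcancel (ginv x)). by rewrite gmulVr gmulV.
Qed.

Lemma ginvM x y : ginv (gmul x y) = gmul (ginv y) (ginv x).
Proof.
apply: (@gcancel (gmul x y)). rewrite gmulVr.
by rewrite -gmulA (gmulA y) gmulVr gmul1 gmulVr.
Qed.

End GroupFacts.

Definition hom (G H : grp) (f : G -> H) : Prop :=
  forall x y : G, f (gmul x y) = gmul (f x) (f y).

Definition iso (G H : grp) : Prop :=
  exists f : G -> H, hom f /\ exists g : H -> G, cancel f g /\ cancel g f.

Definition commutative_grp (G : grp) : Prop :=
  forall x y : G, gmul x y = gmul y x.

(** Elements are pairs (a, s), s : bool being
      the element of Z/2Z; (a,s)(b,t) = (a * s.b, s + t). *)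
Section InvSdprod.
Variables (A : grp) (hA : commutative_grp A).

Definition sigma (s : bool) (b : A) : A := if s then ginv b else b.

Definition dmul (p q : A * bool) : A * bool :=
  (gmul p.1 (sigma p.2 q.1), addb p.2 q.2).
Definition dinv (p : A * bool) : A * bool :=
  (if p.2 then p.1 else ginv p.1, p.2).
Definition done_ : A * bool := (gone, false).

Lemma sigmaM s (b c : A) : sigma s (gmul b c) = gmul (sigma s b) (sigma s c).
Proof. case: s => //=. by rewrite ginvM hA. Qed.

Lemma sigma_comp s t (c : A) : sigma s (sigma t c) = sigma (addb s t) c.
Proof. by case: s; case: t => //=; rewrite ginvK. Qed.

Lemma dmulA p q r : dmul p (dmul q r) = dmul (dmul p q) r.
Proof.
case: p q r => [a s] [b t] [c u]; rewrite /dmul /=.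
by rewrite sigmaM sigma_comp gmulA addbA.
Qed.

Lemma dmul1 p : dmul done_ p = p.
Proof. by case: p => a s; rewrite /dmul /= gmul1. Qed.

Lemma dmulV p : dmul (dinv p) p = done_.
Proof.
case: p => a s; rewrite /dmul /dinv /done_ /=.
by case: s => /=; rewrite ?gmulVr ?gmulV.
Qed.

Definition inv_sdprod : grp := Grp dmulA dmul1 dmulV.
End InvSdprod.

Definition zmod_grp (Z : zmodType) : grp :=
  @Grp Z +%R -%R 0 (@addrA Z) (@add0r Z) (@addNr Z).

Definition zdih (Z : zmodType) : grp :=
  inv_sdprod (fun x y : zmod_grp Z => @addrC Z x y).

(** D_{2n} (n >= 1) = Z/nZ >| Z/2Z, i.e. <a,b | a^2 = b^n = 1, a^-1 b a = b^-1>
    (for n >= 1 the type 'I_n.-1.+1 is 'I_n, the integers mod n). *)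
Definition D2 (n : nat) : grp := zdih [the zmodType of 'I_n.-1.+1].

Definition Dinf : grp := zdih int.

Definition dihedral (G : grp) : Prop :=
  (exists n : nat, (1 <= n)%N /\ iso G (D2 n)) \/ iso G Dinf.

(** * Group words (elements of the free group, unreduced) and evaluation *)
Inductive term : Type :=
  | tvar of nat
  | tone
  | tmul of term & term
  | tinv of term.

Fixpoint teval (G : grp) (r : nat -> G) (t : term) : G :=
  match t with
  | tvar i => r i
  | tone => gone
  | tmul t1 t2 => gmul (teval r t1) (teval r t2)
  | tinv t1 => ginv (teval r t1)
  end.

Fixpoint tbound (m : nat) (t : term) : Prop :=
  match t with
  | tvar i => (i < m)%N
  | tone => True
  | tmul t1 t2 => tbound m t1 /\ tbound m t2
  | tinv t1 => tbound m t1
  end.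

Definition generates (G : grp) (m : nat) (S : nat -> G) : Prop :=
  forall x : G, exists t, tbound m t /\ teval S t = x.

Definition fin_gen (G : grp) : Prop := exists m S, @generates G m S.

Definition cyclic (G : grp) : Prop := exists g : G, generates 1 (fun _ => g).

(** * Limits in the space of marked groups.
    (G_k, S_k) -> (G, S) in M_m iff for every word w in F_m,
    eventually (w(S_k) = 1 <-> w(S) = 1). *)
Definition limit_of (P : grp -> Prop) (G : grp) : Prop :=
  exists (m : nat) (S : nat -> G), generates m S /\
  exists (Gs : nat -> grp) (Ss : forall k, nat -> Gs k),
    (forall k, P (Gs k)) /\ (forall k, generates m (Ss k)) /\
    (forall t, tbound m t -> exists N, forall k, (N <= k)%N ->
        (teval (Ss k) t = gone <-> teval S t = gone)).

Definition fully_residually (P : grp -> Prop) (G : grp) : Prop :=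
  forall F : list G, (forall x, In x F -> x <> gone) ->
  exists H : grp, P H /\ exists f : G -> H, hom f /\
    (forall x, In x F -> f x <> gone).

(** A quantifier-free formula phi in the variables
    x_0, x_1, ...; the universal sentence "forall x_0 ... x_k, phi" holds in G
    iff phi holds under every assignment of the variables. *)
Inductive qf : Type :=
  | qeq of term & term
  | qand of qf & qf
  | qor of qf & qf
  | qnot of qf.

Fixpoint qsat (G : grp) (r : nat -> G) (phi : qf) : Prop :=
  match phi with
  | qeq t1 t2 => teval r t1 = teval r t2
  | qand p q => qsat r p /\ qsat r q
  | qor p q => qsat r p \/ qsat r q
  | qnot p => ~ qsat r p
  end.

Definition univ_holds (G : grp) (phi : qf) : Prop :=
  forall r : nat -> G, qsat r phi.

Definition ultrafilter (U : (nat -> Prop) -> Prop) : Prop :=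
  [/\ U (fun _ => True),
      ~ U (fun _ => False),
      (forall A B : nat -> Prop, U A -> (forall n, A n -> B n) -> U B),
      (forall A B : nat -> Prop, U A -> U B -> U (fun n => A n /\ B n)) &
      (forall A : nat -> Prop, U A \/ U (fun n => ~ A n))].

(** G is isomorphic to a subgroup of (prod_{n >= 3} D_{2n}) / U, the factor
    of index k being D_{2(k+3)}: an injective homomorphism into the quotient,
    described through representatives f x of the classes. *)
Definition embeds_in_dih_ultraproduct (G : grp) (U : (nat -> Prop) -> Prop) : Prop :=
  exists f : G -> forall k : nat, D2 (k + 3),
    (forall x y : G, U (fun k => f (gmul x y) k = gmul (f x k) (f y k))) /\
    (forall x y : G, U (fun k => f x k = f y k) -> x = y).

(* Main.v *)
From Stdlib Require Import List.
From Stdlib Require Import Classical ProofIrrelevance.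
From HB Require Import structures.
From mathcomp Require Import all_boot all_algebra.
From mathcomp Require Import boolp classical_sets filter zify ring.
Require Import Defs.

Module MP0.
Set Implicit Arguments.
Unset Strict Implicit.
Unset Printing Implicit Defensive.
Import GRing.Theory.
Local Open Scope ring_scope.

Lemma gmul_eqV (G : grp) (x y : G) : gmul x (ginv y) = gone -> x = y.
Proof.
move=> h; have: gmul (gmul x (ginv y)) y = gmul gone y by rewrite h.
by rewrite -gmulA gmulV gmulr1 gmul1.
Qed.

Lemma ginv1 (G : grp) : ginv (@gone G) = gone.
Proof. by rewrite -{2}(gmulV (@gone G)) gmulr1. Qed.

Lemma hom1 (G H : grp) (f : G -> H) : hom f -> f gone = gone.
Proof. by move=> hf; apply: gidem; rewrite -hf gmul1. Qed.

Lemma homV (G H : grp) (f : G -> H) x : hom f -> f (ginv x) = ginv (f x).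
Proof.
move=> hf; apply: gmul_eqV; rewrite ginvK -hf gmulV; exact: hom1.
Qed.

Lemma teval_hom (G H : grp) (f : G -> H) r t : hom f ->
  teval (fun i => f (r i)) t = f (teval r t).
Proof.
move=> hf; elim: t => //= [|t1 IH1 t2 IH2|t IH].
- by rewrite hom1.
- by rewrite IH1 IH2 hf.
- by rewrite IH homV.
Qed.

Lemma teval_ext (G : grp) m (r r' : nat -> G) t :
  (forall i, (i < m)%N -> r i = r' i) -> tbound m t -> teval r t = teval r' t.
Proof.
move=> h; elim: t => /= [i|//|t1 IH1 t2 IH2 [b1 b2]|t IH b].
- exact: h.
- by rewrite IH1 ?IH2.
- by rewrite IH.
Qed.

Lemma hom_comp (G H K : grp) (f : G -> H) (g : H -> K) :
  hom f -> hom g -> hom (fun x => g (f x)).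
Proof. by move=> hf hg x y; rewrite hf hg. Qed.

Lemma iso_refl (G : grp) : iso G G.
Proof. by exists id; split => // ; exists id. Qed.

Lemma hom_inv (G H : grp) (f : G -> H) (g : H -> G) :
  hom f -> cancel f g -> cancel g f -> hom g.
Proof.
move=> hf fg gf x y; apply: (can_inj fg); by rewrite hf !gf.
Qed.

Lemma iso_sym (G H : grp) : iso G H -> iso H G.
Proof.
move=> [f [hf [g [fg gf]]]]; exists g; split; first exact: hom_inv hf fg gf.
by exists f.
Qed.

Lemma iso_trans (G H K : grp) : iso G H -> iso H K -> iso G K.
Proof.
move=> [f [hf [g [fg gf]]]] [f' [hf' [g' [fg' gf']]]].
exists (fun x => f' (f x)); split; first exact: hom_comp.
exists (fun x => g (g' x)); split => x; by rewrite ?fg' ?fg ?gf ?gf'.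
Qed.

Lemma hom_inj1 (G H : grp) (f : G -> H) x y : hom f ->
  f x = f y -> f (gmul x (ginv y)) = gone.
Proof. by move=> hf e; rewrite hf homV // e gmulVr. Qed.

Definition abT (B : grp) (hB : commutative_grp B) : Type := gcar B.
HB.instance Definition _ (B : grp) (hB : commutative_grp B) := gen_eqMixin (abT hB).
HB.instance Definition _ (B : grp) (hB : commutative_grp B) := gen_choiceMixin (abT hB).
Section Ab.
Variables (B : grp) (hB : commutative_grp B).
Let addA : associative (@gmul B : abT hB -> abT hB -> abT hB).
Proof. by move=> x y z; rewrite gmulA. Qed.
Let addC : commutative (@gmul B : abT hB -> abT hB -> abT hB).
Proof. exact: hB. Qed.
Let add0 : left_id (@gone B : abT hB) (@gmul B).
Proof. exact: gmul1. Qed.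
Let addN : left_inverse (@gone B : abT hB) (@ginv B) (@gmul B).
Proof. exact: gmulV. Qed.
HB.instance Definition _ := GRing.isZmodule.Build (abT hB) addA addC add0 addN.
End Ab.

End MP0.
Import MP0.

Module MP1.
Set Implicit Arguments.
Unset Strict Implicit.
Unset Printing Implicit Defensive.
Import GRing.Theory.
Local Open Scope ring_scope.

Fixpoint par (p : nat -> bool) (t : term) : bool :=
  match t with
  | tvar i => p i
  | tone => false
  | tmul a b => par p a (+) par p b
  | tinv a => par p a
  end.

Fixpoint vec (p : nat -> bool) (t : term) : nat -> int :=
  match t with
  | tvar i => fun j => ((j == i) : nat)%:Z
  | tone => fun _ => 0
  | tmul a b => fun j => vec p a j + (if par p a then - vec p b j else vec p b j)
  | tinv a => fun j => if par p a then vec p a j else - vec p a j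
  end.

Lemma zdih_mulE (Z : zmodType) (x y : zdih Z) :
  gmul x y = (x.1 + (if x.2 then - y.1 else y.1), x.2 (+) y.2).
Proof. by []. Qed.
Lemma zdih_invE (Z : zmodType) (x : zdih Z) :
  ginv x = (if x.2 then x.1 else - x.1, x.2).
Proof. by []. Qed.
Lemma zdih_oneE (Z : zmodType) : (gone : zdih Z) = (0, false).
Proof. by []. Qed.

Definition lin (Z : zmodType) m (c : nat -> Z) (v : nat -> int) : Z :=
  \sum_(i < m) c i *~ v i.

Lemma linD (Z : zmodType) m c (v w : nat -> int) :
  lin m c (fun j => v j + w j) = lin m c v + lin m c w :> Z.
Proof. by rewrite /lin -big_split; apply: eq_bigr => i _; rewrite mulrzDr. Qed.
Lemma linN (Z : zmodType) m c (v : nat -> int) :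
  lin m c (fun j => - v j) = - lin m c v :> Z.
Proof. by rewrite /lin -sumrN; apply: eq_bigr => i _; rewrite mulrNz. Qed.
Lemma lin0 (Z : zmodType) m c : lin m c (fun _ => 0) = 0 :> Z.
Proof. by rewrite /lin big1. Qed.
Lemma lin_ext (Z : zmodType) m c (v w : nat -> int) :
  (forall j, (j < m)%N -> v j = w j) -> lin m c v = lin m c w :> Z.
Proof. by move=> h; rewrite /lin; apply: eq_bigr => i _; rewrite h. Qed.
Lemma lin_e (Z : zmodType) m (c : nat -> Z) i : (i < m)%N ->
  lin m c (fun j => ((j == i) : nat)%:Z) = c i.
Proof.
move=> hi; rewrite /lin (bigD1 (Ordinal hi)) //= eqxx mulr1z big1 ?addr0 //.
move=> j hj; suff -> : (nat_of_ord j == i) = false by [].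
by apply/negbTE; apply: contra hj => /eqP e; apply/eqP/val_inj.
Qed.

Lemma teval_zdih (Z : zmodType) m p (h : nat -> zdih Z) t :
  (forall i, (i < m)%N -> (h i).2 = p i) -> tbound m t ->
  teval h t = (lin m (fun i => (h i).1) (vec p t), par p t).
Proof.
move=> hp; elim: t => /= [i hi|_|t1 IH1 t2 IH2 [b1 b2]|t IH b].
- by rewrite lin_e // -hp //; case: (h i).
- by rewrite lin0.
- rewrite IH1 // IH2 //. rewrite /dmul /= linD; case: (par p t1) => //=.
  by rewrite linN.
- rewrite IH // /dinv /=; case: (par p t) => //=; by rewrite linN.
Qed.

Lemma par_zdih (Z : zmodType) m p (h : nat -> zdih Z) t :
  (forall i, (i < m)%N -> (h i).2 = p i) -> tbound m t ->
  (teval h t).2 = par p t.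
Proof. by move=> hp hb; rewrite (teval_zdih hp hb). Qed.

End MP1.
Import MP1.

Module MP2.
Set Implicit Arguments.
Unset Strict Implicit.
Unset Printing Implicit Defensive.
Import GRing.Theory Num.Theory.
Local Open Scope ring_scope.

Definition isubgrp (E : int -> Prop) :=
  [/\ E 0, (forall a b, E a -> E b -> E (a + b)) & (forall a, E a -> E (- a))].

Lemma isubgrp_mulz E a q : isubgrp E -> E a -> E (q * a).
Proof.
case=> E0 ED EN Ea.
have Hn : forall n : nat, E (n%:Z * a).
  elim=> [|n IH]; first by rewrite mul0r.
  by rewrite -addn1 PoszD mulrDl mul1r; apply: ED.
case: q => n; first exact: Hn.
by rewrite NegzE mulNr; apply: EN.
Qed.

Lemma int_subgrp E : isubgrp E -> exists d, E d /\ forall z, E z -> exists q, z = q * d.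
Proof.
move=> hE; have [E0 ED EN] := hE.
have [[n [n0 En]]|no] := pselect (exists n : nat, (0 < n)%N /\ E n%:Z); last first.
  exists 0; split => // z Ez; exists 0; rewrite mulr0.
  case: (eqVneq z 0) => // z0; exfalso; apply: no; exists `|z|%N; split; first by rewrite absz_gt0.
  case: z z0 Ez => k z0 Ez; first by [].
  by move: (EN _ Ez); rewrite NegzE opprK.
pose P := fun k : nat => `[< (0 < k)%N /\ E k%:Z >].
have exP : exists k, P k by exists n; apply/asboolP.
have [d /asboolP [d0 Ed] dmin] := ex_minnP exP.
exists d%:Z; split => // z Ez; exists (z %/ d%:Z)%Z.
have dz0 : d%:Z != 0 by rewrite eqz_nat -lt0n.
have Er : E (z %% d%:Z)%Z.
  have -> : (z %% d%:Z)%Z = z + - ((z %/ d%:Z)%Z * d%:Z) by rewrite {2}(divz_eq z d%:Z); ring.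
  by apply: ED => //; apply: EN; apply: isubgrp_mulz.
have r0 := modz_ge0 z dz0; have rlt : (z %% d%:Z)%Z < d%:Z by apply: ltz_pmod; rewrite ltz_nat.
case: (boolP ((z %% d%:Z)%Z == 0)) => [/eqP r00|rn0].
  by rewrite {1}(divz_eq z d%:Z) r00 addr0.
exfalso.
have [k ek] : exists k : nat, (z %% d%:Z)%Z = k%:Z by exists `|(z %% d%:Z)%Z|%N; rewrite gez0_abs.
have : (d <= k)%N by apply: dmin; apply/asboolP; split; [rewrite ek in rn0; lia| rewrite -ek].
rewrite ek in rlt; lia.
Qed.

Inductive span (L : list (nat -> int)) : (nat -> int) -> Prop :=
 | span_in v : In v L -> span L v
 | span0 : span L (fun _ => 0)
 | spanD v w : span L v -> span L w -> span L (fun j => v j + w j)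
 | spanN v : span L v -> span L (fun j => - v j).

Definition vsubgrp (P : (nat -> int) -> Prop) :=
  [/\ P (fun _ => 0), (forall v w, P v -> P w -> P (fun j => v j + w j))
    & (forall v, P v -> P (fun j => - v j))].

Lemma vsubgrp_span L : vsubgrp (span L).
Proof. split; [exact: span0|exact: spanD|exact: spanN]. Qed.

Lemma vsubgrp_scal P v q : vsubgrp P -> P v -> P (fun j => q * v j).
Proof.
case=> P0 PD PN Pv.
have Hn : forall n : nat, P (fun j => n%:Z * v j).
  elim=> [|n IH].
    by have -> : (fun j => 0%:Z * v j) = (fun _ => 0) by apply: funext => j; rewrite mul0r.
  have -> : (fun j => n.+1%:Z * v j) = (fun j => (fun j => n%:Z * v j) j + v j).
    by apply: funext => j /=; rewrite -addn1 PoszD mulrDl mul1r.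
  exact: PD.
case: q => n; first exact: Hn.
have -> : (fun j => Negz n * v j) = (fun j => - (fun j => n.+1%:Z * v j) j).
  by apply: funext => j /=; rewrite NegzE mulNr.
exact: PN.
Qed.

Lemma span_sub L L' v : (forall x, In x L -> In x L') -> span L v -> span L' v.
Proof.
move=> sub; elim=> [w /sub|| w w' _ IH _ IH'|w _ IH]; by constructor.
Qed.

Lemma span_at L v k : (forall x, In x L -> x k = 0) -> span L v -> v k = 0.
Proof.
move=> h; elim=> [w /h //|//| w w' _ IH _ IH' /=|w _ IH /=].
- by rewrite IH IH' addr0.
- by rewrite IH oppr0.
Qed.

Lemma noeth m P : vsubgrp P -> exists L, (forall v, In v L -> P v) /\
  (forall v, P v -> exists w, span L w /\ forall j, (j < m)%N -> v j = w j).
Proof.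
elim: m P => [|m IH] P hP.
  exists nil; split => // v _; exists (fun _ => 0); split => //; exact: span0.
have [P0 PD PN] := hP.
pose P' := fun v => P v /\ v m = 0.
have hP' : vsubgrp P'.
  split; first by split.
  - by move=> v w [Pv v0] [Pw w0]; split; [apply: PD|rewrite /= v0 w0 addr0].
  - by move=> v [Pv v0]; split; [apply: PN|rewrite /= v0 oppr0].
have [L' [L'P L'span]] := IH P' hP'.
pose E := fun z => exists v, P v /\ v m = z.
have hE : isubgrp E.
  split; first by exists (fun _ => 0).
  - by move=> a b [v [Pv <-]] [w [Pw <-]]; exists (fun j => v j + w j); split => //; apply: PD.
  - by move=> a [v [Pv <-]]; exists (fun j => - v j); split => //; apply: PN.
have [d [[u [Pu um]] dgen]] := int_subgrp hE.
exists (u :: L'); split.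
  by move=> v [<-|/L'P []].
move=> v Pv; have [q eq] := dgen (v m) (ex_intro _ v (conj Pv erefl)).
pose v' := fun j => v j + - (q * u j).
have Pv' : P' v'.
  split; first by apply: PD => //; apply: PN; apply: vsubgrp_scal.
  by rewrite /v' eq um subrr.
have [w' [sw' ew']] := L'span v' Pv'.
have w'm : w' m = 0.
  apply: (span_at (L := L')) => // x /L'P [].
  by [].
exists (fun j => w' j + q * u j); split.
  apply: spanD; first by apply: span_sub sw' => x hx; right.
  by apply: vsubgrp_scal; [exact: vsubgrp_span|apply: span_in; left].
move=> j; rewrite ltnS leq_eqVlt => /orP [/eqP ->|jm].
  by rewrite w'm add0r eq um.
by rewrite -ew' // /v' addrNK.
Qed.

End MP2.
Import MP2.

Module MP3.
Set Implicit Arguments.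
Unset Strict Implicit.
Unset Printing Implicit Defensive.
Import GRing.Theory.
Local Open Scope ring_scope.

Lemma In_mem (T : eqType) (x : T) (s : seq T) : x \in s -> In x s.
Proof. elim: s => //= y s IH; rewrite inE => /orP [/eqP ->|/IH]; by [left|right]. Qed.

Lemma list_choice (A B : Type) (R : A -> B -> Prop) (L : list A) :
  (forall x, In x L -> exists y, R x y) ->
  exists L' : list B, forall x, In x L -> exists y, In y L' /\ R x y.
Proof.
elim: L => [|x L IH] h; first by exists nil.
have [y Ry] := h x (or_introl erefl).
have [L' HL'] := IH (fun z hz => h z (or_intror hz)).
exists (y :: L') => z [<-|/HL' [y' [? ?]]]; [exists y; split => //; left|exists y'; split => //; right] => //.
Qed.

Lemma list_choiceP (A B : Type) (R : A -> B -> Prop) (L : list A) :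
  (forall x, In x L -> exists y, R x y) ->
  exists L' : list B, (forall y, In y L' -> exists x, In x L /\ R x y) /\
     forall x, In x L -> exists y, In y L' /\ R x y.
Proof.
elim: L => [|x L IH] h; first by exists nil.
have [y Ry] := h x (or_introl erefl).
have [L' [H1 HL']] := IH (fun z hz => h z (or_intror hz)).
exists (y :: L'); split.
  by move=> y' [<-|/H1 [x' [? ?]]]; [exists x; split => //; left|exists x'; split => //; right] => //.
move=> z [<-|/HL' [y' [? ?]]]; [exists y; split => //; left|exists y'; split => //; right] => //.
Qed.

Definition Zof (b : option nat) : zmodType :=
  match b with Some n => ('I_n.-1.+1 : zmodType) | None => (int : zmodType) end.

Lemma dihedral_Zof b : dihedral (zdih (Zof b)).
Proof.
case: b => [n|]; last by right; exact: iso_refl.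
left; exists n.-1.+1; split => //; exact: iso_refl.
Qed.

Definition matchW (G H : grp) (S : nat -> G) (h : nat -> H) (W : list term) :=
  forall w, In w W -> (teval h w = gone <-> teval S w = gone).

Definition LA (G : grp) m (S : nat -> G) : Prop :=
  forall W : list term, (forall w, In w W -> tbound m w) ->
  exists H : grp, dihedral H /\ exists h : nat -> H, matchW S h W.

Definition LAp (G : grp) m (S : nat -> G) (p : nat -> bool) : Prop :=
  forall W : list term, (forall w, In w W -> tbound m w) ->
  exists b (h : nat -> zdih (Zof b)), (forall i, (i < m)%N -> (h i).2 = p i) /\ matchW S h W.

Lemma iso_matchW (G H K : grp) (S : nat -> G) (h : nat -> H) W :
  iso H K -> matchW S h W -> exists h' : nat -> K, matchW S h' W.
Proof.
move=> [f [hf [g [fg gf]]]] hm; exists (fun i => f (h i)) => w /hm <-.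
rewrite teval_hom //; split => [e|->]; last exact: hom1.
by rewrite -(fg (teval h w)) e (hom1 (hom_inv hf fg gf)).
Qed.

Lemma LA_LAp (G : grp) m (S : nat -> G) : LA m S -> exists p, LAp m S p.
Proof.
move=> hLA.
have LAz : forall W : list term, (forall w, In w W -> tbound m w) ->
    exists b (h : nat -> zdih (Zof b)), matchW S h W.
  move=> W hW; have [H [[[n [_ iH]]|iH] [h hm]]] := hLA W hW.
    by have [h' ?] := iso_matchW iH hm; exists (Some n), h'.
  by have [h' ?] := iso_matchW iH hm; exists None, h'.
apply: NNPP => nop.
have hs : forall s : m.-tuple bool, exists W, (forall w, In w W -> tbound m w) /\
    ~ (exists b (h : nat -> zdih (Zof b)),
         (forall i, (i < m)%N -> (h i).2 = nth false s i) /\ matchW S h W).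
  move=> s; apply: NNPP => hn; apply: nop; exists (fun i => nth false s i) => W hW.
  apply: NNPP => hn2; apply: hn; exists W; split => //.
pose Wf := fun s => proj1_sig (cid (hs s)).
pose W := List.concat (List.map Wf (enum {: m.-tuple bool})).
have inW : forall s w, In w (Wf s) -> In w W.
  move=> s w hw; apply/in_concat; exists (Wf s); split => //.
  by apply: in_map; apply: In_mem; rewrite mem_enum.
have bW : forall w, In w W -> tbound m w.
  move=> w /in_concat [l [/in_map_iff [s [<- _]] hw]].
  exact: (proj1 (proj2_sig (cid (hs s))) w hw).
have [b [h hm]] := LAz W bW.
pose s0 := [tuple (h i).2 | i < m].
apply: (proj2 (proj2_sig (cid (hs s0)))); exists b, h; split.
  by move=> i hi; rewrite -[i]/(nat_of_ord (Ordinal hi)) nth_mktuple.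
by move=> w hw; apply: hm; apply: inW hw.
Qed.

End MP3.
Import MP3.

Module MP4.
Set Implicit Arguments.
Unset Strict Implicit.
Unset Printing Implicit Defensive.
Import GRing.Theory.
Local Open Scope ring_scope.

Section Core.
Variables (G : grp) (m : nat) (S : nat -> G) (p : nat -> bool).
Hypothesis genS : generates m S.
Hypothesis hLA : LAp m S p.

Lemma rel_par t : tbound m t -> teval S t = gone -> par p t = false.
Proof.
move=> bt e.
have [//|b [h [hp hm]]] := hLA (W := t :: nil); first by move=> w [<-|[]].
have := hm t (or_introl erefl); rewrite e => [[_ /(_ erefl)]] e1.
by rewrite -(par_zdih hp bt) e1.
Qed.

Lemma core (F : list G) : (forall x, In x F -> x <> gone) ->
  exists b (phi : G -> zdih (Zof b)), hom phi /\
    (forall i, (i < m)%N -> (phi (S i)).2 = p i) /\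
    (forall x, In x F -> phi x <> gone).
Proof.
move=> hF.
have tofP : forall x : G, { t | tbound m t /\ teval S t = x }.
  by move=> x; apply: cid; have [t [? ?]] := genS x; exists t.
pose tof := fun x => proj1_sig (tofP x).
pose P := fun v : nat -> int => exists t, [/\ tbound m t, teval S t = gone &
   forall j, (j < m)%N -> v j = vec p t j].
have hP : vsubgrp P.
  split.
  - by exists tone.
  - move=> v w [t1 [b1 e1 v1]] [t2 [b2 e2 v2]]; exists (tmul t1 t2); split => //=.
      by rewrite e1 e2 gmul1.
    by move=> j hj; rewrite v1 // v2 // (rel_par b1 e1).
  - move=> v [t1 [b1 e1 v1]]; exists (tinv t1); split => //=.
      by rewrite e1 ginv1.
    by move=> j hj; rewrite v1 // (rel_par b1 e1).
have [L [LP Lspan]] := noeth m hP.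
have [TL [TLP TLL]] := list_choiceP (R := fun v t => [/\ tbound m t, teval S t = gone &
   forall j, (j < m)%N -> v j = vec p t j]) LP.
pose W := TL ++ List.map tof F.
have bW : forall w, In w W -> tbound m w.
  move=> w hw; case: (in_app_or _ _ _ hw) => [/TLP [v [_ [? _ _]]] //|].
  move=> /(in_map_iff tof F w) [x [<- _]].
  exact: (proj1 (proj2_sig (tofP x))).
have [b [h [hp hm]]] := hLA bW.
pose c := fun i => (h i).1.
have relh : forall t, In t TL -> lin m c (vec p t) = 0.
  move=> t ht; have [v [_ [bt et _]]] := TLP t ht.
  have htW : In t W by apply: in_or_app; left.
  have [_ /(_ et)] := hm t htW.
  by rewrite (teval_zdih hp bt) => -[].
have vanL : forall v, In v L -> lin m c v = 0.
  move=> v /TLL [t [ht [_ _ vt]]]; rewrite -(relh t ht); exact: lin_ext.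
have vanS : forall v, span L v -> lin m c v = 0.
  move=> v; elim=> [w /vanL //||w w' _ IH _ IH'|w _ IH].
  - exact: lin0.
  - by rewrite linD IH IH' addr0.
  - by rewrite linN IH oppr0.
have relG : forall t, tbound m t -> teval S t = gone -> teval h t = gone.
  move=> t bt et.
  have [w [sw ew]] := Lspan (vec p t) (ex_intro _ t (And3 bt et (fun j _ => erefl))).
  rewrite (teval_zdih hp bt) (rel_par bt et).
  have -> : lin m c (vec p t) = lin m c w by apply: lin_ext.
  by rewrite vanS.
pose phi := fun x => teval h (tof x).
have phiE : forall t, tbound m t -> phi (teval S t) = teval h t.
  move=> t bt; rewrite /phi; set x := teval S t.
  have [b1 e1] := proj2_sig (tofP x); rewrite -/(tof x) in b1 e1 *.
  symmetry; apply: gmul_eqV.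
  have := relG (tmul t (tinv (tof x))); rewrite /= e1 gmulVr; apply => //.
have hphi : hom phi.
  move=> x y; have [bx ex] := proj2_sig (tofP x); have [byy ey] := proj2_sig (tofP y).
  rewrite -{1}ex -{1}ey -[gmul _ _]/(teval S (tmul (tof x) (tof y))) phiE //.
exists b, phi; split => //; split.
  by move=> i hi; rewrite -[S i]/(teval S (tvar i)) phiE // hp.
move=> x hx; rewrite /phi.
have hxW : In (tof x) W by apply: in_or_app; right; apply: in_map.
have [e _] := hm (tof x) hxW; move=> /e; rewrite (proj2 (proj2_sig (tofP x))); exact: hF.
Qed.
End Core.

End MP4.
Import MP4.

Module MP5.
Set Implicit Arguments.
Unset Strict Implicit.
Unset Printing Implicit Defensive.
Import GRing.Theory.
Local Open Scope ring_scope.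

Lemma list_max (A : Type) (Q : A -> nat -> Prop) (W : list A) :
  (forall w, In w W -> exists N, forall k, (N <= k)%N -> Q w k) ->
  exists N, forall k, (N <= k)%N -> forall w, In w W -> Q w k.
Proof.
elim: W => [|w W IH] h; first by exists 0%N.
have [N1 h1] := h w (or_introl erefl).
have [N2 h2] := IH (fun z hz => h z (or_intror hz)).
exists (maxn N1 N2) => k hk z [<-|hz].
  by apply: h1; apply: leq_trans hk; apply: leq_maxl.
by apply: h2 => //; apply: leq_trans hk; apply: leq_maxr.
Qed.

Lemma lim_LA (G : grp) : limit_of dihedral G ->
  exists m (S : nat -> G), generates m S /\ LA m S.
Proof.
move=> [m [S [gS [Gs [Ss [dG [gSs cv]]]]]]]; exists m, S; split => // W bW.
have [N hN] := @list_max _ (fun w k => teval (Ss k) w = gone <-> teval S w = gone) W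
  (fun w hw => cv w (bW w hw)).
by exists (Gs N); split; [exact: dG|exists (Ss N) => w hw; apply: hN].
Qed.

Lemma nonzero_list (G : grp) (L : list G) :
  exists F, (forall x, In x F -> x <> gone) /\ (forall x, In x L -> x <> gone -> In x F).
Proof.
elim: L => [|y L [F [h1 h2]]]; first by exists nil.
case: (pselect (y = gone)) => [->|ny].
  by exists F; split => // x [<-|hx] //; apply: h2.
exists (y :: F); split; first by move=> x [<-|] //; apply: h1.
by move=> x [<-|hx] nx; [left|right; apply: h2].
Qed.

Lemma res_LA (G : grp) m (S : nat -> G) : fully_residually dihedral G -> LA m S.
Proof.
move=> hres W bW.
have [F [hF1 hF2]] := nonzero_list (List.map (teval S) W).
have [H [dH [f [hf nf]]]] := hres F hF1.
exists H; split => //; exists (fun i => f (S i)) => w hw; rewrite teval_hom //.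
split => [e|->]; last exact: hom1.
apply: NNPP => ne; apply: (nf (teval S w)) => //; apply: hF2 => //.
exact: in_map.
Qed.

Lemma LAp_res (G : grp) m (S : nat -> G) p : generates m S -> LAp m S p ->
  fully_residually dihedral G.
Proof.
move=> gS hL F hF; have [b [phi [hphi [_ nz]]]] := core gS hL hF.
by exists (zdih (Zof b)); split; [exact: dihedral_Zof|exists phi].
Qed.

Definition litf (G : grp) (S : nat -> G) (w : term) : qf :=
  if `[< teval S w = gone >] then qeq w tone else qnot (qeq w tone).

Lemma qsat_conj (H : grp) (r : nat -> H) (L : list qf) :
  qsat r (fold_right qand (qeq tone tone) L) <-> forall phi, In phi L -> qsat r phi.
Proof.
elim: L => [|a L IH] /=; first by split.
split => [[ha /IH hL] phi [<-|/hL]|h] //.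
by split; [apply: h; left|apply/IH => phi hp; apply: h; right].
Qed.

Lemma Th_LA (G : grp) m (S : nat -> G) :
  (forall phi : qf, (forall n : nat, (3 <= n)%N -> univ_holds (D2 n) phi) ->
       univ_holds G phi) -> LA m S.
Proof.
move=> hTh W bW.
pose phi := qnot (fold_right qand (qeq tone tone) (List.map (litf S) W)).
have nG : ~ univ_holds G phi.
  move=> /(_ S) /=; apply; apply/qsat_conj => psi /in_map_iff [w [<- _]].
  rewrite /litf; case: (asboolP (teval S w = gone)) => //=.
have [n [n3 nD]] : exists n, (3 <= n)%N /\ ~ univ_holds (D2 n) phi.
  by apply: NNPP => hn; apply: nG; apply: hTh => n n3; apply: NNPP => hn2; apply: hn; exists n.
have [r hr] : exists r : nat -> D2 n, ~ qsat r phi by apply: NNPP => hn; apply: nD => r; apply: NNPP => ?; apply: hn; exists r.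
have hc : qsat r (fold_right qand (qeq tone tone) (List.map (litf S) W)) by apply: NNPP.
exists (D2 n); split; first by left; exists n; split; [apply: leq_trans n3|exact: iso_refl].
exists r => w hw; have := (proj1 (qsat_conj _ _) hc) (litf S w) (in_map _ _ _ hw).
rewrite /litf; case: (asboolP (teval S w = gone)) => /= e h; split => // e2; by [].
Qed.

Section Los.
Variables (G : grp) (U : (nat -> Prop) -> Prop) (hU : ultrafilter U).
Variable f : G -> forall k : nat, D2 (k + 3).
Hypothesis fhom : forall x y : G, U (fun k => f (gmul x y) k = gmul (f x k) (f y k)).
Hypothesis finj : forall x y : G, U (fun k => f x k = f y k) -> x = y.

Let UT : U (fun _ => True). Proof. by case: hU. Qed.
Let UF : ~ U (fun _ => False). Proof. by case: hU. Qed.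
Let US A B : U A -> (forall n, A n -> B n) -> U B. Proof. by case: hU => _ _ h _ _; apply: h. Qed.
Let UI A B : U A -> U B -> U (fun n => A n /\ B n). Proof. by case: hU => _ _ _ h _; apply: h. Qed.
Let UC A : U A \/ U (fun n => ~ A n). Proof. by case: hU => _ _ _ _ h; apply: h. Qed.
Let Uall (A : nat -> Prop) : (forall n, A n) -> U A. Proof. by move=> h; apply: US UT _. Qed.

Let f1 : U (fun k => f gone k = gone).
Proof.
apply: US (fhom gone gone) _ => k; rewrite gmul1 => e; apply: gidem; by rewrite -e.
Qed.

Lemma ev_U (r : nat -> G) t :
  U (fun k => f (teval r t) k = teval (fun i => f (r i) k) t).
Proof.
elim: t => [i|||t IH] /=; first exact: Uall.
- exact: f1.
- move=> t1 IH1 t2 IH2; apply: US (UI (fhom (teval r t1) (teval r t2)) (UI IH1 IH2)) _.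
  by move=> k [-> [-> ->]].
- apply: US (UI (fhom (ginv (teval r t)) (teval r t)) (UI f1 IH)) _.
  move=> k [e [e1 e2]]; rewrite gmulV e1 in e; rewrite -e2.
  by apply: (@gmul_eqV _ _ (ginv (f (teval r t) k))); rewrite ginvK -e.
Qed.

Lemma qsat_U (r : nat -> G) phi :
  qsat r phi <-> U (fun k => qsat (fun i => f (r i) k) phi).
Proof.
elim: phi => [t1 t2|p1 IH1 p2 IH2|p1 IH1 p2 IH2|p IH] /=.
- split => [e|h].
    by apply: US (UI (ev_U r t1) (ev_U r t2)) _ => k [<- <-]; rewrite e.
  apply: finj; apply: US (UI h (UI (ev_U r t1) (ev_U r t2))) _.
  by move=> k [e [-> ->]].
- split => [[/IH1 h1 /IH2 h2]|h]; first exact: UI.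
  by split; [apply/IH1; apply: US h _ => k []|apply/IH2; apply: US h _ => k []].
- split => [[/IH1 h|/IH2 h]|h]; first by apply: US h _ => k; left.
    by apply: US h _ => k; right.
  case: (UC (fun k => qsat (fun i => f (r i) k) p1)) => [/IH1|h1]; first by left.
  right; apply/IH2; apply: US (UI h h1) _ => k [[]] //.
- split => [np|h np].
    case: (UC (fun k => qsat (fun i => f (r i) k) p)) => // /IH //.
  by apply: UF; apply: US (UI h (proj1 IH np)) _ => k [].
Qed.
End Los.

Lemma ultra_Th (G : grp) U : ultrafilter U -> embeds_in_dih_ultraproduct G U ->
  forall phi : qf, (forall n : nat, (3 <= n)%N -> univ_holds (D2 n) phi) ->
       univ_holds G phi.
Proof.
move=> hU [f [fhom finj]] phi hphi r.
apply/(qsat_U hU fhom finj); case: hU => UT _ US _ _; apply: US UT _ => k _.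
by apply: hphi; rewrite addn3.
Qed.

End MP5.
Import MP5.

Module MP6a.
Set Implicit Arguments.
Unset Strict Implicit.
Unset Printing Implicit Defensive.
Import GRing.Theory.
Local Open Scope ring_scope.

Section Subgrp.
Variables (G : grp) (P : G -> Prop) (P1 : P gone)
  (PM : forall x y, P x -> P y -> P (gmul x y)) (PV : forall x, P x -> P (ginv x)).
Definition sT := {x : G | P x}.
Lemma sT_eq (x y : sT) : proj1_sig x = proj1_sig y -> x = y.
Proof.
case: x y => [x px] [y py] /= e; subst y; by rewrite (proof_irrelevance _ px py).
Qed.
Definition smul (x y : sT) : sT := exist _ (gmul (proj1_sig x) (proj1_sig y)) (PM (proj2_sig x) (proj2_sig y)).
Definition sinv (x : sT) : sT := exist _ (ginv (proj1_sig x)) (PV (proj2_sig x)).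
Definition sone : sT := exist _ gone P1.
Lemma smulA x y z : smul x (smul y z) = smul (smul x y) z.
Proof. by apply: sT_eq; rewrite /= gmulA. Qed.
Lemma smul1 x : smul sone x = x.
Proof. by apply: sT_eq; rewrite /= gmul1. Qed.
Lemma smulV x : smul (sinv x) x = sone.
Proof. by apply: sT_eq; rewrite /= gmulV. Qed.
Definition subgrp : grp := Grp smulA smul1 smulV.
Lemma val_teval (r : nat -> subgrp) t :
  proj1_sig (teval r t) = teval (fun i => proj1_sig (r i)) t.
Proof. by elim: t => //= [t1 -> t2 ->|t ->]. Qed.
Lemma val_hom : hom (fun x : subgrp => proj1_sig x).
Proof. by []. Qed.
End Subgrp.

Section SubG.
Variables (H : grp) (m : nat) (c : nat -> H).
Definition inspan (x : H) := exists t, tbound m t /\ teval c t = x.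
Lemma inspan1 : inspan gone. Proof. by exists tone. Qed.
Lemma inspanM x y : inspan x -> inspan y -> inspan (gmul x y).
Proof. by move=> [t [bt <-]] [u [bu <-]]; exists (tmul t u). Qed.
Lemma inspanV x : inspan x -> inspan (ginv x).
Proof. by move=> [t [bt <-]]; exists (tinv t). Qed.
Definition SubG : grp := subgrp inspan1 inspanM inspanV.
Definition mterm (i : nat) := if (i < m)%N then tvar i else tone.
Lemma mark_bound i : tbound m (mterm i). Proof. by rewrite /mterm; case: ifP. Qed.
Definition smark (i : nat) : SubG :=
  exist _ (teval c (mterm i)) (ex_intro _ (mterm i) (conj (mark_bound i) erefl)).
Lemma smark_teval t : tbound m t -> proj1_sig (teval smark t) = teval c t.
Proof.
move=> bt; rewrite val_teval; apply: teval_ext bt => i hi /=.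
by rewrite /mterm hi.
Qed.
Lemma smark_gen : generates m smark.
Proof.
move=> [x [t [bt ex]]]; exists t; split => //; apply: sT_eq.
by rewrite smark_teval.
Qed.
End SubG.

Fixpoint tpown (t : term) (n : nat) : term :=
  match n with 0 => tone | n'.+1 => tmul (tpown t n') t end.
Definition tpow (t : term) (z : int) : term :=
  match z with Posz n => tpown t n | Negz n => tinv (tpown t n.+1) end.
Fixpoint tlin (v : nat -> int) (m : nat) : term :=
  match m with 0 => tone | m'.+1 => tmul (tlin v m') (tpow (tvar m') (v m')) end.

Lemma tbound_tpow m t z : tbound m t -> tbound m (tpow t z).
Proof.
move=> bt; have h : forall n, tbound m (tpown t n) by elim=> //= n IH.
by case: z => n /=.
Qed.

Lemma tbound_tlin v m : tbound m (tlin v m).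
Proof.
have hm : forall k m, (k <= m)%N -> tbound m (tlin v k).
  elim=> // k IH m' hk /=; split; first by apply: IH; apply: ltnW.
  exact: tbound_tpow.
exact: hm.
Qed.

Lemma teval_tpow (Z : zmodType) (c : nat -> zmod_grp Z) t z :
  teval c (tpow t z) = (teval c t : Z) *~ z.
Proof.
have h : forall n, teval c (tpown t n) = (teval c t : Z) *+ n.
  by elim=> [|n IH] /=; rewrite ?mulr0n // IH mulrSr.
case: z => n; first by rewrite /tpow h pmulrn.
have e : teval c (tinv (tpown t n.+1)) = - (teval c (tpown t n.+1) : Z) by [].
by rewrite /tpow e h NegzE mulrNz pmulrn.
Qed.

Lemma teval_tlin (Z : zmodType) (c : nat -> zmod_grp Z) v m :
  teval c (tlin v m) = lin m c v.
Proof.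
elim: m => [|m IH] /=; first by rewrite /lin big_ord0.
rewrite /lin big_ord_recr /= -/(lin m c v) -IH teval_tpow //.
Qed.

Lemma teval_even (Z : zmodType) (c : nat -> zmod_grp Z) t :
  teval (fun i => ((c i : Z), false) : zdih Z) t = (teval c t, false).
Proof. by elim: t => //= [t1 -> t2 ->|t ->]. Qed.

Fixpoint terms_upto (m k : nat) : list term :=
  match k with
  | 0 => tone :: List.map tvar (iota 0 m)
  | k'.+1 => terms_upto m k' ++ List.map tinv (terms_upto m k') ++
       List.flat_map (fun a => List.map (tmul a) (terms_upto m k')) (terms_upto m k')
  end.

Fixpoint depth (t : term) : nat :=
  match t with
  | tvar _ | tone => 0
  | tmul a b => (maxn (depth a) (depth b)).+1
  | tinv a => (depth a).+1
  end.

Lemma tu_mono m k k' t : (k <= k')%N -> In t (terms_upto m k) -> In t (terms_upto m k').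
Proof.
move=> hk; rewrite -(subnKC hk); elim: (k' - k)%N => [|d IH]; first by rewrite addn0.
by move=> /IH h; rewrite addnS /=; apply: in_or_app; left.
Qed.

Lemma tu_complete m t : tbound m t -> In t (terms_upto m (depth t)).
Proof.
elim: t => [i|_|a IHa b IHb [ba bb]|a IHa ba] /=.
- by move=> hi; right; apply: in_map; apply: In_mem; rewrite mem_iota.
- by left.
- apply: in_or_app; right; apply: in_or_app; right; apply/in_flat_map.
  exists a; split; first by apply: tu_mono (IHa ba); apply: leq_maxl.
  by apply: in_map; apply: tu_mono (IHb bb); apply: leq_maxr.
- by apply: in_or_app; right; apply: in_or_app; left; apply: in_map; apply: IHa.
Qed.

Lemma In_mem_rev (T : eqType) (x : T) (s : seq T) : In x s -> x \in s.
Proof. elim: s => //= y s IH [->|/IH h]; rewrite inE; first by rewrite eqxx. by rewrite h orbT. Qed.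

Lemma tu_bound m k t : In t (terms_upto m k) -> tbound m t.
Proof.
elim: k t => [|k IH] t /=.
  case=> [<-|] //; case/(in_map_iff tvar (iota 0 m) t) => i [<- hi].
  by have := In_mem_rev hi; rewrite mem_iota add0n => /andP [].

move=> h; case: (in_app_or _ _ _ h) => {h} h; first exact: IH.
case: (in_app_or _ _ _ h) => {h} h.
  by move: h => /in_map_iff [a [<- ha]]; exact: (IH a ha).
move: h => /in_flat_map [a [ha h]].
by move: h => /in_map_iff [b [<- hb]]; split; [exact: (IH a ha)|exact: (IH b hb)].
Qed.

Lemma subcyc (Z : zmodType) (g : Z) (P : Z -> Prop) :
  (forall x, exists z, x = g *~ z) -> P 0 -> (forall x y, P x -> P y -> P (x + y)) ->
  (forall x, P x -> P (- x)) -> exists d, P d /\ forall x, P x -> exists q, x = d *~ q.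
Proof.
move=> gen P0 PD PN.
pose E := fun z => P (g *~ z).
have hE : isubgrp E.
  split; first by rewrite /E mulr0z.
  - by move=> a b ha hb; rewrite /E mulrzDr; apply: PD.
  - by move=> a ha; rewrite /E mulrNz; apply: PN.
have [d0 [Ed0 gd0]] := int_subgrp hE.
exists (g *~ d0); split => // x Px; have [z ez] := gen x; subst x.
have [q ->] := gd0 z Px; exists q; by rewrite mulrC mulrzA.
Qed.

Lemma cyclic_SubG (Z : zmodType) (g : Z) m (c : nat -> zmod_grp Z) :
  (forall x, exists z, x = g *~ z) -> cyclic (SubG m c).
Proof.
move=> gen.
have [d [Pd hd]] := subcyc (P := inspan m c) gen (inspan1 m c)
   (fun x y => @inspanM _ m c x y) (fun x => @inspanV _ m c x).
exists (exist _ d Pd) => [[x Px]]; have [q eq] := hd x Px.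
exists (tpow (tvar 0) q); split; first exact: tbound_tpow.
by apply: sT_eq; rewrite val_teval teval_tpow /= eq.
Qed.

Lemma Zof_gen b : exists g : Zof b, forall x, exists z, x = g *~ z.
Proof.
case: b => [n|] /=.
  exists (inZp 1) => x; exists (nat_of_ord x)%:Z; apply: val_inj => /=.
  by rewrite -pmulrn Zp_mulrn /= modnMml mul1n modn_small.
by exists 1 => x; exists x; rewrite intz.
Qed.

End MP6a.
Import MP6a.

Module MP6.
Set Implicit Arguments.
Unset Strict Implicit.
Unset Printing Implicit Defensive.
Import GRing.Theory.
Local Open Scope ring_scope.

Lemma teval_ab (B : grp) (hB : commutative_grp B) (r : nat -> B) t :
  teval (G := B) r t = teval (G := zmod_grp (abT hB)) r t.
Proof. by elim: t => //= [t1 -> t2 ->|t ->]. Qed.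

Lemma teval_sd (B : grp) (hB : commutative_grp B) (r : nat -> inv_sdprod hB) t :
  teval (G := inv_sdprod hB) r t = teval (G := zdih (abT hB)) r t.
Proof. by elim: t => //= [t1 -> t2 ->|t ->]. Qed.

Lemma par_false p m t : (forall i, (i < m)%N -> p i = false) -> tbound m t -> par p t = false.
Proof.
move=> h; elim: t => /= [i /h //|//|t1 IH1 t2 IH2 [b1 b2]|t IH b].
- by rewrite IH1 // IH2.
- exact: IH.
Qed.

Section Split.
Variables (G : grp) (m : nat) (S : nat -> G) (p : nat -> bool).
Hypothesis genS : generates m S.
Hypothesis hLA : LAp m S p.
Hypothesis nonab : ~ commutative_grp G.

Definition chom b (phi : G -> zdih (Zof b)) :=
  hom phi /\ forall i, (i < m)%N -> (phi (S i)).2 = p i.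

Lemma phi_par b (phi : G -> zdih (Zof b)) t : chom phi -> tbound m t ->
  (phi (teval S t)).2 = par p t.
Proof. by move=> [hf hp] bt; rewrite -teval_hom //; apply: par_zdih bt. Qed.

Lemma triv z : (forall b (phi : G -> zdih (Zof b)), chom phi -> phi z = gone) -> z = gone.
Proof.
move=> h; apply: NNPP => nz.
have [|b [phi [hf [hp nf]]]] := core genS hLA (F := z :: nil); first by move=> x [<-|[]].
by apply: (nf z (or_introl erefl)); apply: h.
Qed.

Let phi0E : { bp : {b : option nat & G -> zdih (Zof b)} | chom (projT2 bp) }.
Proof.
apply: cid; have [|b [phi [hf [hp _]]]] := core genS hLA (F := nil); first by move=> x [].
by exists (existT _ b phi).
Qed.
Definition parG (x : G) : bool := (projT2 (proj1_sig phi0E) x).2.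

Lemma parE b (phi : G -> zdih (Zof b)) x : chom phi -> (phi x).2 = parG x.
Proof.
move=> hc; have [t [bt <-]] := genS x; rewrite /parG !phi_par //.
exact: (proj2_sig phi0E).
Qed.

Let hom0 : hom (projT2 (proj1_sig phi0E)).
Proof. by case: (proj2_sig phi0E). Qed.

Lemma parM x y : parG (gmul x y) = parG x (+) parG y.
Proof. by rewrite /parG hom0. Qed.
Lemma par1 : parG gone = false.
Proof. by rewrite /parG hom1. Qed.
Lemma parV x : parG (ginv x) = parG x.
Proof. by rewrite /parG homV. Qed.

Lemma comm_even x y : parG x = false -> parG y = false -> gmul x y = gmul y x.
Proof.
move=> px py; apply: gmul_eqV; apply: triv => b phi hc.
have [hf _] := hc; rewrite hf homV // !hf.
move: (parE x hc) (parE y hc); rewrite px py.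
case: (phi x) => a [] // _; case: (phi y) => c [] // _.
by rewrite /= /dmul /= [c + a]addrC subrr.
Qed.

Lemma exists_refl : exists j, (j < m)%N /\ p j = true.
Proof.
apply: NNPP => hn; apply: nonab => x y; apply: comm_even.
all: have hp : forall i, (i < m)%N -> p i = false by
  move=> i hi; apply/negbTE/negP => pi; apply: hn; exists i.
- have [t [bt <-]] := genS x; rewrite -(parE _ (proj2_sig phi0E)).
  by rewrite (phi_par (proj2_sig phi0E) bt); exact: par_false hp bt.
- have [t [bt <-]] := genS y; rewrite -(parE _ (proj2_sig phi0E)).
  by rewrite (phi_par (proj2_sig phi0E) bt); exact: par_false hp bt.
Qed.

Let jE : { j | (j < m)%N /\ p j = true }.
Proof. apply: cid; exact: exists_refl. Qed.
Definition rr : G := S (proj1_sig jE).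

Lemma par_r : parG rr = true.
Proof.
rewrite -(parE _ (proj2_sig phi0E)); have [jm pj] := proj2_sig jE.
by rewrite (proj2 (proj2_sig phi0E)) // pj.
Qed.

Lemma rr2 : gmul rr rr = gone.
Proof.
apply: triv => b phi hc; have [hf _] := hc; rewrite hf.
move: (parE rr hc); rewrite par_r; case: (phi rr) => a [] // _.
by rewrite /= /dmul /= subrr.
Qed.

Lemma rr_conj x : parG x = false -> gmul rr x = gmul (ginv x) rr.
Proof.
move=> px; apply: gmul_eqV; apply: triv => b phi hc.
have [hf _] := hc; rewrite hf (homV _ hf) !hf (homV _ hf).
move: (parE x hc) (parE rr hc); rewrite px par_r.
case: (phi x) => c [] // _; case: (phi rr) => a [] // _.
by rewrite /= /dmul /= [- c + a]addrC subrr.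
Qed.

Let PA (x : G) := parG x = false.
Let PA1 : PA gone. Proof. exact: par1. Qed.
Let PAM x y : PA x -> PA y -> PA (gmul x y).
Proof. by rewrite /PA parM => -> ->. Qed.
Let PAV x : PA x -> PA (ginv x).
Proof. by rewrite /PA parV. Qed.
Definition AG : grp := subgrp PA1 PAM PAV.
Lemma AG_comm : commutative_grp AG.
Proof. move=> x y; apply: sT_eq; apply: comm_even; [exact: (proj2_sig x)|exact: (proj2_sig y)]. Qed.

Definition rpow (s : bool) : G := if s then rr else gone.
Lemma par_rpow s : parG (rpow s) = s.
Proof. by case: s; rewrite /= ?par_r ?par1. Qed.
Lemma rpow2 s : gmul (rpow s) (rpow s) = gone.
Proof. by case: s; rewrite /= ?rr2 ?gmul1. Qed.

Lemma fP (x : G) : PA (gmul x (rpow (parG x))).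
Proof. by rewrite /PA parM par_rpow addbb. Qed.
Definition fS (x : G) : inv_sdprod AG_comm := (exist _ _ (fP x), parG x).
Definition gS (u : inv_sdprod AG_comm) : G := gmul (proj1_sig u.1) (rpow u.2).

Lemma gS_hom : hom gS.
Proof.
move=> [[a pa] s] [[b pb] t]; rewrite /gS /= /dmul /=.
case: s; case: t => /=.
- by rewrite gmulr1 -!gmulA (gmulA rr) rr_conj // -gmulA rr2 gmulr1.
- by rewrite !gmulr1 -!gmulA rr_conj.
- by rewrite !gmulr1 -!gmulA.
- by rewrite !gmulr1.
Qed.

Lemma fgS : cancel fS gS.
Proof. by move=> x; rewrite /gS /= -gmulA rpow2 gmulr1. Qed.

Lemma gfS : cancel gS fS.
Proof.
move=> [[a pa] s]; rewrite /fS.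
have e : parG (gS (exist PA a pa, s)) = s by rewrite /gS /= parM pa par_rpow.
apply: injective_projections => /=; last exact: e.
apply: sT_eq => /=; rewrite e /gS /= -gmulA rpow2 gmulr1 //.
Qed.

Lemma iso_split : iso G (inv_sdprod AG_comm).
Proof.
exists fS; split; first exact: (hom_inv gS_hom gfS fgS).
by exists gS; split; [exact: fgS|exact: gfS].
Qed.

Lemma fS_hom : hom fS.
Proof. exact: (hom_inv gS_hom gfS fgS). Qed.

Definition ai (i : nat) : AG := (fS (S i)).1.

Lemma fS_S i : (i < m)%N -> fS (S i) = (ai i, p i).
Proof.
move=> hi; apply: injective_projections => //=.
rewrite -(parE _ (proj2_sig phi0E)); exact: (proj2 (proj2_sig phi0E) i hi).
Qed.

Lemma ai_gen : generates m ai.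
Proof.
move=> x; have [t [bt et]] := genS (proj1_sig x).
have e1 : fS (proj1_sig x) = (x, false).
  have px : parG (proj1_sig x) = false := proj2_sig x.
  apply: injective_projections => //=; apply: sT_eq => /=.
  by rewrite px gmulr1.
have e2 : fS (teval S t) = teval (G := inv_sdprod AG_comm) (fun i => (ai i, p i)) t.
  rewrite -(teval_hom _ _ fS_hom); apply: teval_ext bt => i hi; exact: fS_S.
rewrite et e1 teval_sd (@teval_zdih _ m p) // in e2.
case: e2 => ex _; exists (tlin (vec p t) m); split; first exact: tbound_tlin.
by rewrite (@teval_ab _ AG_comm) teval_tlin ex.
Qed.

Lemma AG_limit : limit_of cyclic AG.
Proof.
exists m, ai; split; first exact: ai_gen.
pose L k := List.map (fun u => proj1_sig (teval ai u)) (terms_upto m k).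
pose hF := fun k => cid (nonzero_list (L k)).
have hk : forall k, {bp : {b : option nat & G -> zdih (Zof b)} | chom (projT2 bp) /\
    forall x, In x (proj1_sig (hF k)) -> projT2 bp x <> gone}.
  move=> k; apply: cid; have [nz _] := proj2_sig (hF k).
  have [b [phi [hf [hp nf]]]] := core genS hLA nz.
  by exists (existT _ b phi).
pose bk k := projT1 (proj1_sig (hk k)).
pose phik k : G -> zdih (Zof (bk k)) := projT2 (proj1_sig (hk k)).
pose ck k i := (phik k (proj1_sig (ai i))).1.
exists (fun k => SubG (H := zmod_grp (Zof (bk k))) m (ck k)).
exists (fun k => smark (H := zmod_grp (Zof (bk k))) m (ck k)).
split; first by move=> k; have [g hg] := Zof_gen (bk k); exact: cyclic_SubG hg.
split; first by move=> k; exact: smark_gen.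
move=> u bu; exists (depth u) => k hk'.
have [hc nf] := proj2_sig (hk k); rewrite -/(phik k) in hc nf.
have hf : hom (phik k) by case: hc.
have key : (teval (ck k) u, false) = phik k (proj1_sig (teval ai u)).
  transitivity (teval (fun i => ((ck k i : Zof (bk k)), false) : zdih (Zof (bk k))) u).
    by rewrite teval_even.
  rewrite val_teval -(teval_hom _ _ hf); apply: (@teval_ext (zdih (Zof (bk k))) m) bu => i hi /=.
  apply: injective_projections => //=; rewrite (parE _ hc); symmetry; exact: (proj2_sig (ai i)).
split.
- move=> e; have e0 : teval (ck k) u = 0 by rewrite -(smark_teval (m:=m)) // e.
  apply: NNPP => ne.
  have hx : In (proj1_sig (teval ai u)) (proj1_sig (hF k)).
    apply: (proj2 (proj2_sig (hF k))).
      apply: in_map; exact: tu_mono hk' (tu_complete bu).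
    by move=> e'; apply: ne; apply: sT_eq; rewrite e'.
  by apply: (nf _ hx); rewrite -key e0.
- move=> e; apply: sT_eq; rewrite smark_teval //.
  move: key; rewrite e /= (hom1 hf); by case.
Qed.
End Split.

Lemma LA_iso (G : grp) m (S : nat -> G) p : generates m S -> LAp m S p ->
  ~ commutative_grp G ->
  exists (A : grp) (hA : commutative_grp A), limit_of cyclic A /\ iso G (inv_sdprod hA).
Proof.
move=> gS hL nab; exists (AG gS hL), (@AG_comm _ _ _ _ gS hL); split.
  exact: AG_limit.
exact: (@iso_split _ _ _ _ gS hL nab).
Qed.

End MP6.
Import MP6.

Module MP7.
Set Implicit Arguments.
Unset Strict Implicit.
Unset Printing Implicit Defensive.
Import GRing.Theory Num.Theory.
Local Open Scope ring_scope.

Lemma comm_teval (C : grp) (g y : C) t : gmul y g = gmul g y ->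
  gmul y (teval (fun _ => g) t) = gmul (teval (fun _ => g) t) y.
Proof.
move=> hy; elim: t => /= [i||t1 IH1 t2 IH2|t IH].
- exact: hy.
- by rewrite gmul1 gmulr1.
- by rewrite gmulA IH1 -gmulA IH2 gmulA.
- set a := teval _ t in IH *.
  apply: (@gcancel _ a); rewrite gmulA -IH -gmulA gmulVr gmulr1.
  by rewrite !gmulA gmulVr gmul1.
Qed.

Lemma cyc_comm (C : grp) : cyclic C -> commutative_grp C.
Proof.
move=> [g gen] x y.
have hg : forall z : C, gmul z g = gmul g z.
  move=> z; have [t [_ <-]] := gen z; symmetry; exact: comm_teval.
have [t [_ <-]] := gen y; exact: comm_teval.
Qed.

Lemma iso_inj_surj (C H : grp) (psi : H -> C) : hom psi -> injective psi ->
  (forall x, exists y, psi y = x) -> iso C H.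
Proof.
move=> hpsi ipsi spsi.
pose h := fun x => proj1_sig (cid (spsi x)).
have hK : cancel h psi by move=> x; exact: (proj2_sig (cid (spsi x))).
have Kh : cancel psi h by move=> y; apply: ipsi; rewrite hK.
exists h; split; first exact: (hom_inv hpsi Kh hK).
by exists psi.
Qed.

Lemma isubgrp_nat E : isubgrp E -> exists n : nat, E n%:Z /\ forall z, E z -> exists q, z = q * n%:Z.
Proof.
move=> hE; have [d [Ed gd]] := int_subgrp hE; have [_ _ EN] := hE.
case: d Ed gd => n Ed gd; first by exists n.
exists n.+1; split; first by move: (EN _ Ed); rewrite NegzE opprK.
move=> z /gd [q ->]; exists (- q); rewrite NegzE; lia.
Qed.

Lemma teval_const_z (Z : zmodType) (g : Z) t :
  exists z, teval (G := zmod_grp Z) (fun _ => g) t = g *~ z.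
Proof.
elim: t => [i||t1 [z1 e1] t2 [z2 e2]|t [z e]] /=.
- by exists 1.
- by exists 0.
- by exists (z1 + z2); rewrite e1 e2 mulrzDr.
- by exists (- z); rewrite e mulrNz.
Qed.

Lemma cyc_iso (C : grp) (hC : cyclic C) : exists b, iso C (zmod_grp (Zof b)).
Proof.
have hcomm := cyc_comm hC; have [g gen] := hC.
have gen2 : forall x : abT hcomm, exists z, x = (g : abT hcomm) *~ z.
  move=> x; have [t [bt <-]] := gen x; rewrite (@teval_ab _ hcomm).
  exact: teval_const_z.
pose E := fun z => (g : abT hcomm) *~ z = 0.
have hE : isubgrp E.
  split; first by rewrite /E mulr0z.
  - by move=> a b; rewrite /E mulrzDr => -> ->; rewrite addr0.
  - by move=> a; rewrite /E mulrNz => ->; rewrite oppr0.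
have [n [En gn]] := isubgrp_nat hE.
case: n En gn => [|n] En gn.
- exists None; apply: (@iso_inj_surj C (zmod_grp (Zof None)) (fun z : int => ((g : abT hcomm) *~ z : gcar C))).
  + by move=> z w /=; rewrite mulrzDr.
  + move=> z w /= e; have : E (z - w) by rewrite /E mulrzBr e subrr.
    by move=> /gn [q]; rewrite mulr0 => /eqP; rewrite subr_eq0 => /eqP.
  + by move=> x; have [z ->] := gen2 x; exists z.
- exists (Some n.+1) => /=.
  have gmod : forall a : nat, (g : abT hcomm) *+ (a %% n.+1) = (g : abT hcomm) *+ a.
    move=> a; rewrite {2}(divn_eq a n.+1) mulrnDr mulnC mulrnA.
    by move: En; rewrite /E -pmulrn => ->; rewrite mul0rn add0r.
  apply: (@iso_inj_surj C (zmod_grp (Zof (Some n.+1))) (fun y : 'I_n.+1 => ((g : abT hcomm) *+ y : gcar C))).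
  + move=> y1 y2 /=; have -> : forall a b : abT hcomm, gmul (a : gcar C) b = a + b by [].
    by rewrite -mulrnDr gmod.
  + move=> y1 y2 /= e.
    have : E (y1%:Z - y2%:Z) by rewrite /E mulrzBr -!pmulrn e subrr.
    move=> /gn [q eq]; have h1 := ltn_ord y1; have h2 := ltn_ord y2.
    have hv : nat_of_ord y1 = nat_of_ord y2.
      have [hq|[hq|hq]] : (1 <= q) \/ (q <= -1) \/ q = 0 by lia.
      - have : n.+1%:Z <= q * n.+1%:Z by rewrite -{1}(mul1r n.+1%:Z) ler_wpM2r.
        lia.
      - have : q * n.+1%:Z <= - n.+1%:Z by rewrite -mulN1r ler_wpM2r.
        lia.
      - rewrite hq in eq; lia.
    by apply: val_inj; exact: hv.
  + move=> x; have [z ->] := gen2 x.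
    have hz : 0 <= (z %% n.+1%:Z)%Z by apply: modz_ge0.
    have hlt : ((z %% n.+1%:Z)%Z < n.+1%:Z) by apply: ltz_pmod.
    have ho : (`|(z %% n.+1%:Z)%Z| < n.+1)%N by rewrite -ltz_nat gez0_abs.
    exists (Ordinal ho) => /=.
    have e0 : forall q : int, (g : abT hcomm) *~ (q * n.+1%:Z) = 0.
      by move=> q; rewrite mulrC mulrzA; move: En; rewrite /E => ->; rewrite mul0rz.
    rewrite pmulrn gez0_abs //.
    by rewrite /modz mulrzBr e0 subr0.
Qed.

Lemma sd_iso (B : grp) (hB : commutative_grp B) (Z : zmodType) :
  iso B (zmod_grp Z) -> iso (inv_sdprod hB) (zdih Z).
Proof.
move=> [f [hf [g [fg gf]]]].
exists (fun u : inv_sdprod hB => ((f u.1 : Z), u.2) : zdih Z); split.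
  move=> [a s] [b t] /=; rewrite /dmul /= hf; case: s => //=.
  by rewrite (homV _ hf).
exists (fun u : zdih Z => (g u.1, u.2) : inv_sdprod hB); split.
  by move=> [a s] /=; rewrite fg.
by move=> [a s] /=; rewrite gf.
Qed.

Lemma dihedral_iso (G H : grp) : iso G H -> dihedral H -> dihedral G.
Proof.
move=> iGH [[n [n1 iH]]|iH]; first by left; exists n; split => //; exact: iso_trans iH.
by right; exact: iso_trans iH.
Qed.

Lemma limit_iso (P : grp -> Prop) (G H : grp) : iso G H -> limit_of P H -> limit_of P G.
Proof.
move=> [f [hf [g [fg gf]]]] [m [S [gS rest]]].
have hg := hom_inv hf fg gf.
exists m, (fun i => g (S i)); split.
  move=> x; have [t [bt et]] := gS (f x); exists t; split => //.
  by rewrite teval_hom // et fg.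
case: rest => Gs [Ss [PG [gSs cv]]]; exists Gs, Ss; split => //; split => //.
move=> t bt; have [N hN] := cv t bt; exists N => k hk; rewrite hN // teval_hom //.
split => [->|e]; first exact: hom1.
by rewrite -(gf (teval S t)) e hom1.
Qed.

Lemma lin_extc (Z : zmodType) m (c c' : nat -> Z) v :
  (forall i, (i < m)%N -> c i = c' i) -> lin m c v = lin m c' v.
Proof. by move=> h; rewrite /lin; apply: eq_bigr => i _; rewrite h. Qed.

Definition mk2 (B : grp) (hB : commutative_grp B) m (c : nat -> B) : nat -> inv_sdprod hB :=
  fun i => if (i < m)%N then (c i, false) else (gone, true).
Definition pm (m : nat) : nat -> bool := fun i => (m <= i)%N.

Lemma mk2_eval (B : grp) (hB : commutative_grp B) m (c : nat -> B) t :
  tbound m.+1 t -> teval (mk2 hB m c) t = (teval c (tlin (vec (pm m) t) m), par (pm m) t).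
Proof.
move=> bt; rewrite teval_sd (@teval_zdih _ m.+1 (pm m)) //; last first.
  by move=> i hi; rewrite /mk2 /pm; case: ltnP.
congr pair; rewrite (@teval_ab _ hB) teval_tlin /lin big_ord_recr /=.
rewrite {2}/mk2 ltnn mul0rz addr0; apply: eq_bigr => i _ /=.
by rewrite /mk2 ltn_ord.
Qed.

Lemma tbound_mono k k' t : (k <= k')%N -> tbound k t -> tbound k' t.
Proof.
move=> kk; elim: t => /= [i hi|//|t1 IH1 t2 IH2 [b1 b2]|t1 IH1 b1].
- exact: leq_trans hi kk.
- by split; [apply: IH1|apply: IH2].
- exact: IH1.
Qed.

Lemma mk2_gen (B : grp) (hB : commutative_grp B) m (c : nat -> B) :
  generates m c -> generates m.+1 (mk2 hB m c).
Proof.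
move=> gc [a s]; have [t [bt et]] := gc a.
exists (tmul t (if s then tvar m else tone)); split.
  by split; [exact: (tbound_mono (leqnSn m) bt)|case: s => /=].
have e : teval (mk2 hB m c) t = (a, false).
  rewrite (teval_ext (r' := fun i => (c i, false) : inv_sdprod hB) _ bt); last first.
    by move=> i hi; rewrite /mk2 hi.
  by rewrite teval_sd teval_even -(@teval_ab _ hB) et.
rewrite /= e; case: s => /=; last by rewrite /dmul /= gmulr1.
by rewrite /mk2 ltnn /dmul /= gmulr1.
Qed.

Lemma pair_gone (B : grp) (hB : commutative_grp B) (x : B) (b : bool) :
  ((x, b) = (gone : inv_sdprod hB)) <-> (x = gone /\ b = false).
Proof. by split => [[-> ->]|[-> ->]]. Qed.

Lemma iso_lim (G : grp) :
  (exists (A : grp) (hA : commutative_grp A), limit_of cyclic A /\ iso G (inv_sdprod hA)) ->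
  limit_of dihedral G.
Proof.
move=> [A [hA [[m [T [gT [As [Ts [cAs [gTs cv]]]]]]] iG]]].
apply: (limit_iso iG).
exists m.+1, (mk2 hA m T); split; first exact: mk2_gen.
exists (fun k => inv_sdprod (cyc_comm (cAs k))), (fun k => mk2 (cyc_comm (cAs k)) m (Ts k)).
split.
  move=> k; have [b ib] := cyc_iso (cAs k).
  apply: (dihedral_iso (sd_iso (cyc_comm (cAs k)) ib)); exact: dihedral_Zof.
split; first by move=> k; apply: mk2_gen.
move=> t bt; have [N hN] := cv _ (tbound_tlin (vec (pm m) t) m).
exists N => k hk; rewrite !mk2_eval //.
rewrite !pair_gone hN //.
Qed.

End MP7.
Import MP7.

Module MP8a.
Set Implicit Arguments.
Unset Strict Implicit.
Unset Printing Implicit Defensive.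
Import GRing.Theory Num.Theory.
Local Open Scope ring_scope.

Lemma zdih_map (Z Z' : zmodType) (g : Z -> Z') :
  (forall a b, g (a + b) = g a + g b) ->
  hom (fun u : zdih Z => ((g u.1 : Z'), u.2) : zdih Z').
Proof.
move=> gD.
have g0 : g 0 = 0.
  by apply: (@addrI _ (g 0)); rewrite -gD !addr0.
have gN : forall b, g (- b) = - g b.
  by move=> b; apply/eqP; rewrite -subr_eq0 opprK -gD addNr g0.
move=> [a s] [b t] /=; rewrite /dmul /= gD; case: s => //=.
by rewrite gN.
Qed.

Lemma sumn_ge (L : list nat) x : In x L -> (x <= sumn L)%N.
Proof.
elim: L => //= y L IH [<-|/IH h]; first exact: leq_addr.
by apply: leq_trans h _; apply: leq_addl.
Qed.

Lemma E_inf b (X : list (zdih (Zof b))) M : exists N, (M + 3 <= N)%N /\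
  exists psi : zdih (Zof b) -> D2 N, hom psi /\
    forall x y, In x X -> In y X -> psi x = psi y -> x = y.
Proof.
case: b X => [n|] X /=.
- pose n1 := n.-1.+1; pose q := (M + 3)%N; pose N := (n1 * q)%N.
  have Npos : (0 < N)%N by rewrite muln_gt0 /q addn_gt0 orbT.
  pose g := fun x : 'I_n.-1.+1 => (inZp ((x : nat) * q)%N : 'I_N.-1.+1).
  have gD : forall a b, g (a + b) = g a + g b.
    move=> a b; apply: val_inj => /=; rewrite (prednK Npos).
    by rewrite muln_modl -/N modn_mod modnDm mulnDl.
  have ginj : injective g.
    move=> a b /(congr1 val) /=; rewrite (prednK Npos) !modn_small; last 2 first.
    + by rewrite /N ltn_pmul2r // addn_gt0 orbT.
    + by rewrite /N ltn_pmul2r // addn_gt0 orbT.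
    by move=> /eqP; rewrite eqn_pmul2r ?addn_gt0 ?orbT // => /eqP /val_inj.
  exists N; split; first by rewrite /N leq_pmull.
  exists (fun u : zdih ('I_n.-1.+1) => ((g u.1 : 'I_N.-1.+1), u.2) : zdih 'I_N.-1.+1).
  split; first exact: zdih_map.
  move=> [a s] [c t] _ _ e.
  have e1 : g a = g c := f_equal fst e.
  have e2 : s = t := f_equal snd e.
  by rewrite (ginj _ _ e1) e2.
- pose B := sumn (List.map (fun u : zdih int => `|u.1|%N) X).
  pose N := (M + 3 + B + B)%N.
  have N3 : (3 <= N)%N by rewrite /N; lia.
  pose g := fun z : int => (inZp 1 : 'I_N.-1.+1) *~ z.
  have gD : forall a b, g (a + b) = g a + g b by move=> a c; rewrite /g mulrzDr.
  have gnat : forall k : nat, (k < N)%N -> g k%:Z = 0 -> k = 0%N.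
    move=> k kN /(congr1 val); rewrite /g -pmulrn Zp_mulrn /= prednK ?(leq_trans _ N3) //.
    by rewrite modnMml mul1n modn_small // => ->.
  have bX : forall u, In u X -> (`|u.1| <= B)%N.
    by move=> u hu; apply: sumn_ge; apply: (in_map (fun u : zdih int => `|u.1|%N)).
  exists N; split; first by rewrite /N; lia.
  exists (fun u : zdih int => ((g u.1 : 'I_N.-1.+1), u.2) : zdih 'I_N.-1.+1).
  split; first exact: zdih_map.
  move=> [a s] [c t] ha hc e.
  have e1 : g a = g c := f_equal fst e.
  have e2 : s = t := f_equal snd e.
  rewrite e2; congr pair.
  have ha' := bX _ ha; have hc' := bX _ hc; rewrite /= in ha' hc'.
  have e0 : g (a - c) = 0 by rewrite gD e1 -gD subrr /g mulr0z.
  have hd : (`|a - c| < N)%N by rewrite /N; lia.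
  apply/eqP; rewrite -subr_eq0; apply/eqP.
  move: e0 hd; case: (a - c) => k e0 hd.
    by rewrite (gnat k hd e0).
  have : g (Posz k.+1) = 0 by move: e0; rewrite NegzE /g mulrNz => /eqP; rewrite oppr_eq0 => /eqP.
  by move=> /(gnat _ hd).
Qed.

End MP8a.
Import MP8a.

Module MP8.
Set Implicit Arguments.
Unset Strict Implicit.
Unset Printing Implicit Defensive.
Import GRing.Theory Num.Theory.

Lemma bounded_max (Q : nat -> Prop) k : (exists j, (j <= k)%N /\ Q j) ->
  exists j, [/\ (j <= k)%N, Q j & forall j', (j' <= k)%N -> Q j' -> (j' <= j)%N].
Proof.
elim: k => [|k IH] [j [jk Qj]].
  by exists 0%N; move: jk; rewrite leqn0 => /eqP e; subst j; split => // j'; rewrite leqn0 => /eqP ->.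
case: (pselect (Q k.+1)) => [Qk|nQk].
  by exists k.+1; split => // j' hj' _.
have jk' : (j <= k)%N.
  by move: jk; rewrite leq_eqVlt => /orP [/eqP e|//]; subst j.
have [j0 [j0k Qj0 mx]] := IH (ex_intro _ j (conj jk' Qj)).
exists j0; split => //; first exact: leq_trans j0k (leqnSn k).
move=> j' hj' Qj'; apply: mx => //.
by move: hj'; rewrite leq_eqVlt => /orP [/eqP e|//]; subst j'.
Qed.

Section Ultra.
Variables (G : grp) (m : nat) (S : nat -> G).
Hypothesis genS : generates m S.
Hypothesis CORE : forall F : list G, (forall x, In x F -> x <> gone) ->
  exists b (phi : G -> zdih (Zof b)), hom phi /\ forall x, In x F -> phi x <> gone.

Definition Bj j := List.map (teval S) (terms_upto m j).
Definition injon (H : grp) (f : G -> H) (L : list G) :=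
  forall x y, In x L -> In y L -> f x = f y -> x = y.
Definition Ejk j k := exists psi : G -> D2 (k + 3), hom psi /\ injon psi (Bj j).

Lemma Bj_mono j j' x : (j <= j')%N -> In x (Bj j) -> In x (Bj j').
Proof.
move=> jj /in_map_iff [t [<- ht]]; apply: in_map; exact: tu_mono jj ht.
Qed.

Lemma Bj_all x : exists j, In x (Bj j).
Proof.
have [t [bt <-]] := genS x; exists (depth t); apply: in_map; exact: tu_complete.
Qed.

Lemma E_anti j j' k : (j <= j')%N -> Ejk j' k -> Ejk j k.
Proof.
move=> jj [psi [hp ip]]; exists psi; split => // x y hx hy; apply: ip; exact: Bj_mono jj _.
Qed.

Lemma E_exists j M : exists k, (M <= k)%N /\ Ejk j k.
Proof.
pose L := Bj j.
pose D := List.flat_map (fun x => List.map (fun y => gmul x (ginv y)) L) L.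
have [F [hF1 hF2]] := nonzero_list D.
have [b [phi [hphi nphi]]] := CORE hF1.
have [N [MN [psi [hpsi ipsi]]]] := E_inf (List.map phi L) M.
exists (N - 3)%N; split; first by lia.
rewrite /Ejk subnK; last by lia.
exists (fun x => psi (phi x)); split; first exact: hom_comp.
move=> x y hx hy e.
have e1 : phi x = phi y by apply: ipsi => //; apply: in_map.
apply: gmul_eqV; apply: NNPP => ne; apply: (nphi (gmul x (ginv y))); last exact: hom_inj1.
apply: hF2 => //; apply/in_flat_map; exists x; split => //.
exact: (in_map (fun y => gmul x (ginv y))).
Qed.

Lemma fk_ex k : exists psi : G -> D2 (k + 3), hom psi /\
  forall j, (j <= k)%N -> Ejk j k -> injon psi (Bj j).
Proof.
case: (pselect (exists j, (j <= k)%N /\ Ejk j k)) => [hex|nex].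
  have [j0 [j0k [psi [hp ip]] mx]] := bounded_max hex.
  exists psi; split => // j jk ej x y hx hy; apply: ip; exact: Bj_mono (mx j jk ej) _.
exists (fun _ => gone); split; first by move=> x y; rewrite gmul1.
by move=> j jk ej; exfalso; apply: nex; exists j.
Qed.

Definition fU (x : G) (k : nat) : D2 (k + 3) := proj1_sig (cid (fk_ex k)) x.

Definition Tj j : set nat := fun k => (j <= k)%N /\ Ejk j k.

Lemma ultra_embed : exists U, ultrafilter U /\ embeds_in_dih_ultraproduct G U.
Proof.
pose FF := filter_from setT Tj.
have FFf : Filter FF.
  apply: filter_fromT_filter; first by exists 0%N.
  move=> i j; exists (maxn i j) => k [lk El]; split; split.
  - exact: leq_trans (leq_maxl i j) lk.
  - exact: E_anti (leq_maxl i j) El.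
  - exact: leq_trans (leq_maxr i j) lk.
  - exact: E_anti (leq_maxr i j) El.
have FFp : ProperFilter FF.
  apply: filter_from_proper => i _; have [k [ik Ek]] := E_exists i i.
  by exists k.
have [UU [UUu sUU]] := ultraFilterLemma FFp.
exists UU; split.
  split.
  - exact: (@filterT _ UU).
  - exact: (@filter_not_empty _ UU).
  - move=> A B UA AB; exact: (@filterS _ UU _ A B AB UA).
  - move=> A B UA UB; exact: (@filterI _ UU _ A B UA UB).
  - move=> A; exact: in_ultra_setVsetC.
exists fU; split.
  move=> x y; apply: (@filterS _ UU _ setT); last exact: (@filterT _ UU).
  move=> k _; rewrite /fU; by case: (proj2_sig (cid (fk_ex k))) => hp _; rewrite hp.
move=> x y Ue.
have [jx hx] := Bj_all x; have [jy hy] := Bj_all y.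
pose j := maxn jx jy.
have hx' : In x (Bj j) by apply: Bj_mono hx; apply: leq_maxl.
have hy' : In y (Bj j) by apply: Bj_mono hy; apply: leq_maxr.
have UT : UU (Tj j) by apply: sUU; exists j.
apply: NNPP => nxy; apply: (@filter_not_empty _ UU _).
apply: (@filterS _ UU _ (Tj j `&` (fun k => fU x k = fU y k))); last exact: filterI.
move=> k [[jk Ejk'] e]; apply: nxy.
have [_ inj] := proj2_sig (cid (fk_ex k)).
exact: (inj j jk Ejk' x y hx' hy' e).
Qed.
End Ultra.

End MP8.
Import MP8.


Set Implicit Arguments.
Unset Strict Implicit.
Definition Hub (G : grp) := exists m (S : nat -> G) p, generates m S /\ LAp m S p.

Lemma lim_hub G : limit_of dihedral G -> Hub G.
Proof.
move=> /lim_LA [m [S [gS hL]]]; have [p hp] := LA_LAp hL.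
by exists m, S, p.
Qed.

Lemma res_hub G : fin_gen G -> fully_residually dihedral G -> Hub G.
Proof.
move=> [m [S gS]] hr; have [p hp] := LA_LAp (@res_LA G m S hr).
by exists m, S, p.
Qed.

Lemma th_hub G : fin_gen G ->
  (forall phi : qf, (forall n : nat, (3 <= n)%N -> univ_holds (D2 n) phi) ->
       univ_holds G phi) -> Hub G.
Proof.
move=> [m [S gS]] hr; have [p hp] := LA_LAp (@Th_LA G m S hr).
by exists m, S, p.
Qed.

Lemma hub_res G : Hub G -> fully_residually dihedral G.
Proof. by move=> [m [S [p [gS hL]]]]; exact: LAp_res gS hL. Qed.

Lemma hub_iso G : ~ commutative_grp G -> Hub G ->
  exists (A : grp) (hA : commutative_grp A), limit_of cyclic A /\ iso G (inv_sdprod hA).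
Proof. by move=> nab [m [S [p [gS hL]]]]; exact: LA_iso gS hL nab. Qed.

Lemma hub_ultra G : Hub G ->
  exists U : (nat -> Prop) -> Prop, ultrafilter U /\ embeds_in_dih_ultraproduct G U.
Proof.
move=> [m [S [p [gS hL]]]]; apply: (ultra_embed gS).
move=> F hF; have [b [phi [hphi [_ nz]]]] := core gS hL hF.
by exists b, phi.
Qed.

Theorem theorem4p1 (G : grp) :
  fin_gen G ->
  ~ commutative_grp G ->
  (limit_of dihedral G <-> fully_residually dihedral G) /\
  (limit_of dihedral G <->
     exists (A : grp) (hA : commutative_grp A),
       limit_of cyclic A /\ iso G (inv_sdprod hA)) /\
  (limit_of dihedral G <->
     forall phi : qf,
       (forall n : nat, (3 <= n)%N -> univ_holds (D2 n) phi) ->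
       univ_holds G phi) /\
  (limit_of dihedral G <->
     exists U : (nat -> Prop) -> Prop,
       ultrafilter U /\ embeds_in_dih_ultraproduct G U).
Proof.
move=> fg nab.
have hub_lim : Hub G -> limit_of dihedral G.
  by move=> h; apply: iso_lim; apply: hub_iso.
have hub_th : Hub G -> forall phi : qf,
       (forall n : nat, (3 <= n)%N -> univ_holds (D2 n) phi) -> univ_holds G phi.
  by move=> h; have [U [hU he]] := hub_ultra h; exact: ultra_Th hU he.
split; [|split; [|split]]; split.
- by move=> /lim_hub; exact: hub_res.
- by move=> /(res_hub fg); exact: hub_lim.
- by move=> /lim_hub; exact: hub_iso.
- by move=> /iso_lim.
- by move=> /lim_hub; exact: hub_th.
- by move=> /(th_hub fg); exact: hub_lim.
- by move=> /lim_hub; exact: hub_ultra.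
- move=> [U [hU he]]; apply: hub_lim; apply: (th_hub fg); exact: ultra_Th hU he.
Qed.
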